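(* Let $p,q$ be CFM processes with $p \approx^\oplus q$. If $p$ satisfies DNI, then $q$ satisfies DNI.
   Context: Fix a finite set of actions $Act = H \cup L \cup \{\tau\}$, where $H$ (high-level actions) and $L$ (low-level actions) are disjoint and $\tau$ is the silent action; $\mu$ ranges over $Act$, $h$ over $H$. Fix a finite set of process constants disjoint from $Act$. CFM terms: guarded $s ::= \mathbf{0} \mid \mu.q \mid s+s$; sequential $q ::= s \mid C$; parallel $p ::= q \mid p \,|\, p$. A CFM process is a term all of whose constants have a defining equation $C \doteq s$ with $s$ guarded. LTS rules: $\mu.p \xrightarrow{\mu} p$; if $p \xrightarrow{\mu} p'$ and $C \doteq p$ then $C \xrightarrow{\mu} p'$; if $p \xrightarrow{\mu} p'$ then $p+q \xrightarrow{\mu} p'$ and $q+p \xrightarrow{\mu} p'$; if $p \xrightarrow{\mu} p'$ then $p\,|\,q \xrightarrow{\mu} p'\,|\,q$ and $q\,|\,p \xrightarrow{\mu} q\,|\,p'$. Reachability is in this LTS. An FSM is $N=(S,A,T)$ with finite places $S$, finite labels $A\ni\tau$, and $T \subseteq S \times A \times (S \cup \{\theta\})$ ($\theta$ the empty multiset). Markings are finite multisets over $S$; a transition $(s,\ell,m)$ is enabled at $m_1$ if $s\in m_1$ and firing gives $m_1 \xrightarrow{\ell} (m_1\ominus s)\oplus m$. Net semantics: places are sequential CFM processes other than $\mathbf{0}$; $\mathrm{dec}(\mathbf{0})=\theta$, $\mathrm{dec}(\mu.p)=\{\mu.p\}$, $\mathrm{dec}(p+p')=\{p+p'\}$, $\mathrm{dec}(C)=\{C\}$,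 $\mathrm{dec}(p\,|\,p')=\mathrm{dec}(p)\oplus\mathrm{dec}(p')$. The net $[\![p]\!]$ has initial marking $\mathrm{dec}(p)$, all places and transitions reachable from it, and transitions $(s,\mu,\mathrm{dec}(s'))$ for reachable places $s$ with $s\xrightarrow{\mu}s'$ in the LTS. The net $[\![p\setminus H]\!]$ is obtained by renaming each place $s$ as $s\setminus H$, removing transitions labelled in $H$, and taking initial marking $\mathrm{dec}(p)\setminus H$ (elementwise renaming; similarly $m\setminus H$ for any marking $m$). Branching bisimilarity $\approx$ on places of an FSM: $s\Rightarrow^\epsilon m$ is the reflexive-transitive closure of $\tau$-steps. $R\subseteq S\times S$ is a branching bisimulation if whenever $(s_1,s_2)\in R$ and $s_1\xrightarrow{\ell}m_1$: either $\ell=\tau$ and $\exists m_2$, $s_2\Rightarrow^\epsilon m_2$ with $(s_1,m_2),(m_1,m_2)\in R$; or $\exists s,m_2$ with $s_2\Rightarrow^\epsilon s\xrightarrow{\ell}m_2$, $(s_1,s)\in R$ and either $m_1=\theta=m_2$ or $(m_1,m_2)\in R$; and symmetrically. $\approx$ is the union of all branching bisimulations. The additive closure $R^\oplus$ is the least marking relation with $(\theta,\theta)\in R^\oplus$ and closed under $(s_1,s_2)\in R,(m_1,m_2)\in R^\oplus \Rightarrow (s_1\oplus m_1,s_2\oplus m_2)\in R^\oplus$. Branching team equivalence is $\approx^\oplus$; for processes, $p\approx^\oplus q$ iff $\mathrm{dec}(p)\approx^\oplus\mathrm{dec}(q)$ in the union of the nets $[\![p]\!]$ and $[\![q]\!]$,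 and $p'\setminus H\approx^\oplus p''\setminus H$ iff $\mathrm{dec}(p')\setminus H\approx^\oplus\mathrm{dec}(p'')\setminus H$ in the union of their restricted nets. DNI: a CFM process $p$ satisfies DNI if for all $p',p''$ reachable from $p$ and $h\in H$ with $p'\xrightarrow{h}p''$, $p'\setminus H\approx^\oplus p''\setminus H$; equivalently, for all markings $m_1,m_2$ reachable from $\mathrm{dec}(p)$ in $[\![p]\!]$ and $h\in H$ with $m_1\xrightarrow{h}m_2$, $m_1\setminus H \approx^\oplus m_2\setminus H$ in $[\![p\setminus H]\!]$. *)

(* Defs.v *)
From Stdlib Require Import List Permutation FinFun.
Import ListNotations.
Set Implicit Arguments.

Section CFM.
Variables (A K : Type).
(* A : visible action names (H ∪ L); K : process constants. *)

Inductive act := Tau | Vis (a : A).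

Inductive term :=
| Nil
| Pre (mu : act) (t : term)
| Sum (t1 t2 : term)
| Cst (k : K)
| Par (t1 t2 : term).

Inductive guarded : term -> Prop :=
| g_nil : guarded Nil
| g_pre mu q : sequential q -> guarded (Pre mu q)
| g_sum s1 s2 : guarded s1 -> guarded s2 -> guarded (Sum s1 s2)
with sequential : term -> Prop :=
| sq_g s : guarded s -> sequential s
| sq_c k : sequential (Cst k).

Inductive parallel : term -> Prop :=
| pr_s q : sequential q -> parallel q
| pr_par p1 p2 : parallel p1 -> parallel p2 -> parallel (Par p1 p2).

Variable defn : K -> term.

Inductive step : term -> act -> term -> Prop :=
| st_pre mu p : step (Pre mu p) mu p
| st_cst k mu p' : step (defn k) mu p' -> step (Cst k) mu p'
| st_suml p q mu p' : step p mu p' -> step (Sum p q) mu p'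
| st_sumr p q mu p' : step p mu p' -> step (Sum q p) mu p'
| st_parl p q mu p' : step p mu p' -> step (Par p q) mu (Par p' q)
| st_parr p q mu p' : step p mu p' -> step (Par q p) mu (Par q p').

Inductive reach : term -> term -> Prop :=
| rc_refl p : reach p p
| rc_step p mu p' p'' : step p mu p' -> reach p' p'' -> reach p p''.

(* markings: finite multisets, represented by lists up to permutation *)
Definition marking := list term.

Fixpoint dec (t : term) : marking :=
  match t with
  | Nil => []
  | Par t1 t2 => dec t1 ++ dec t2
  | _ => [t]
  end.

Definition of_opt (o : option term) : marking :=
  match o with None => [] | Some x => [x] end.

Definition places := term -> Prop.
Definition transs := term -> act -> option term -> Prop.

Definition fire (T : transs) (m1 : marking) (l : act) (m2 : marking) : Prop :=
  exists s o rest, T s l o /\ Permutation m1 (s :: rest) /\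
                   Permutation m2 (rest ++ of_opt o).

Inductive mreach (T : transs) : marking -> marking -> Prop :=
| mr_refl m : mreach T m m
| mr_step m l m' m'' : fire T m l m' -> mreach T m' m'' -> mreach T m m''.

Definition pre_trans : transs :=
  fun s mu o => exists s', step s mu s' /\ dec s' = of_opt o.

Definition net_places (p : term) : places :=
  fun s => exists m, mreach pre_trans (dec p) m /\ In s m.
Definition net_trans (p : term) : transs :=
  fun s mu o => net_places p s /\ pre_trans s mu o.

(* The restricted net [[p \ H]]: place s \ H is represented by s itself
   (bijective renaming); transitions labelled in H are removed. *)
Definition isH (H : A -> Prop) (mu : act) : Prop :=
  match mu with Tau => False | Vis a => H a end.
Definition rnet_trans (H : A -> Prop) (p : term) : transs :=
  fun s mu o => net_trans p s mu o /\ ~ isH H mu.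

Definition uplaces (S1 S2 : places) : places := fun s => S1 s \/ S2 s.
Definition utrans (T1 T2 : transs) : transs :=
  fun s l o => T1 s l o \/ T2 s l o.

(* s ⇒ε s' : sequence of τ-steps (only markings that are places matter) *)
Inductive tau_star (T : transs) : term -> term -> Prop :=
| ts_refl s : tau_star T s s
| ts_step s s' s'' : T s Tau (Some s') -> tau_star T s' s'' -> tau_star T s s''.

Definition bb_clause (T : transs) (R : term -> term -> Prop)
    (s1 s2 : term) (l : act) (m1 : option term) : Prop :=
  (l = Tau /\ exists m2, tau_star T s2 m2 /\ R s1 m2 /\
                         exists x, m1 = Some x /\ R x m2)
  \/ (exists s m2, tau_star T s2 s /\ T s l m2 /\ R s1 s /\
        ((m1 = None /\ m2 = None) \/
         exists x y, m1 = Some x /\ m2 = Some y /\ R x y)).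

Definition is_branching_bisim (S : places) (T : transs)
    (R : term -> term -> Prop) : Prop :=
  (forall x y, R x y -> S x /\ S y) /\
  (forall s1 s2, R s1 s2 -> forall l m1, T s1 l m1 -> bb_clause T R s1 s2 l m1) /\
  (forall s1 s2, R s1 s2 -> forall l m2, T s2 l m2 ->
       bb_clause T (fun x y => R y x) s2 s1 l m2).

Definition bbisim (S : places) (T : transs) (x y : term) : Prop :=
  exists R, is_branching_bisim S T R /\ R x y.

Inductive addclos (R : term -> term -> Prop) : marking -> marking -> Prop :=
| ac_nil : addclos R [] []
| ac_cons s1 s2 m1 m2 : R s1 s2 -> addclos R m1 m2 -> addclos R (s1 :: m1) (s2 :: m2)
| ac_perm m1 m2 m1' m2' : addclos R m1 m2 -> Permutation m1 m1' ->
    Permutation m2 m2' -> addclos R m1' m2'.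

Definition team_equiv (p q : term) : Prop :=
  addclos (bbisim (uplaces (net_places p) (net_places q))
                  (utrans (net_trans p) (net_trans q))) (dec p) (dec q).

Definition team_equiv_restr (H : A -> Prop) (p q : term) : Prop :=
  addclos (bbisim (uplaces (net_places p) (net_places q))
                  (utrans (rnet_trans H p) (rnet_trans H q))) (dec p) (dec q).

Definition DNI (H : A -> Prop) (p : term) : Prop :=
  forall p' p'' h, reach p p' -> reach p p'' -> H h ->
    step p' (Vis h) p'' -> team_equiv_restr H p' p''.

End CFM.

(* Main.v *)
Require Import Defs.
From Stdlib Require Import List Permutation FinFun.
Import ListNotations.

Definition sim {A K} (T : transs A K) (R : term A K -> term A K -> Prop) : Prop :=
  forall s1 s2, R s1 s2 -> forall l m1, T s1 l m1 -> bb_clause T R s1 s2 l m1.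
Definition flipr {A K} (R : term A K -> term A K -> Prop) := fun x y => R y x.
Definition gb {A K} (T : transs A K) (x y : term A K) : Prop :=
  exists R, sim T R /\ sim T (flipr R) /\ R x y.

Lemma tau_star_mono {A K} (T T' : transs A K) :
  (forall s s', T s (Tau _) (Some s') -> T' s (Tau _) (Some s')) ->
  forall a b, tau_star T a b -> tau_star T' a b.
Proof. intros HT a b Hs; induction Hs; [constructor | econstructor; eauto]. Qed.

Lemma tau_star_trans {A K} (T : transs A K) a b c :
  tau_star T a b -> tau_star T b c -> tau_star T a c.
Proof. intros H1; induction H1; intros; auto; econstructor; eauto. Qed.

Lemma tau_star_snoc {A K} (T : transs A K) a b c :
  tau_star T a b -> T b (Tau _) (Some c) -> tau_star T a c.
Proof. intros; eapply tau_star_trans; eauto; econstructor; eauto; constructor. Qed.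

Lemma bb_mono {A K} (T T' : transs A K) (R R' : term A K -> term A K -> Prop) s1 s2 l m1 :
  (forall s s', T s (Tau _) (Some s') -> T' s (Tau _) (Some s')) ->
  (forall s o, T s l o -> T' s l o) ->
  (forall a b, R a b -> R' a b) ->
  bb_clause T R s1 s2 l m1 -> bb_clause T' R' s1 s2 l m1.
Proof.
  intros HT Hl HR [[Hl' [m2 [Ht [Hr [x [Hx Hr2]]]]]] | [s [m2 [Ht [Hs [Hr Hc]]]]]].
  - left. split; auto. exists m2. split; [eapply tau_star_mono; eauto|]. split; auto. eauto.
  - right. exists s, m2. split; [eapply tau_star_mono; eauto|]. split; auto. split; auto.
    destruct Hc as [Hc | [x [y [? [? ?]]]]]; [left; auto | right; eauto 6].
Qed.

Lemma sim_ext {A K} (T : transs A K) R R' :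
  (forall a b, R a b <-> R' a b) -> sim T R -> sim T R'.
Proof.
  intros He Hs s1 s2 Hr l m1 Ht. apply He in Hr.
  eapply bb_mono; [ | | | apply (Hs _ _ Hr _ _ Ht)]; auto. intros; apply He; auto.
Qed.

Lemma transfer {A K} {T : transs A K} {R} : sim T R ->
  forall y y1, tau_star T y y1 -> forall z, R y z -> exists z1, tau_star T z z1 /\ R y1 z1.
Proof.
  intros Hs y y1 Ht; induction Ht as [y | y y' y1 Hst Ht IH]; intros z Hr.
  - exists z; split; [constructor | auto].
  - destruct (Hs _ _ Hr _ _ Hst) as [[_ [m2 [Hm [_ [x [Hx Hr2]]]]]] | [s [m2 [Hm [Hs2 [_ Hc]]]]]].
    + injection Hx as <-. destruct (IH _ Hr2) as [z1 [? ?]]. exists z1; split; auto.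
      eapply tau_star_trans; eauto.
    + destruct Hc as [[Hc _] | [x [y0 [Hx [Hy Hr2]]]]]; [discriminate|].
      injection Hx as <-. subst m2. destruct (IH _ Hr2) as [z1 [? ?]]. exists z1; split; auto.
      eapply tau_star_trans; [eapply tau_star_snoc; eauto | eauto].
Qed.

Definition comp {A K} (R1 R2 : term A K -> term A K -> Prop) :=
  fun x z => exists y, R1 x y /\ R2 y z.

Lemma sim_comp {A K} {T : transs A K} {R1 R2} : sim T R1 -> sim T R2 -> sim T (comp R1 R2).
Proof.
  intros H1 H2 x z [y [Hxy Hyz]] l m1 Ht.
  destruct (H1 _ _ Hxy _ _ Ht) as [[Hl [m2 [Hm [Hr1 [x' [Hx Hr2]]]]]] | [s [m2 [Hm [Hs [Hr Hc]]]]]].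
  - destruct (transfer H2 _ _ Hm _ Hyz) as [z1 [Hz1 Hr3]].
    left. split; auto. exists z1. split; auto. split; [exists m2; auto|].
    exists x'; split; auto. exists m2; auto.
  - destruct (transfer H2 _ _ Hm _ Hyz) as [z1 [Hz1 Hr3]].
    destruct (H2 _ _ Hr3 _ _ Hs) as [[Hl [z2 [Hz2 [Hr4 [y' [Hy' Hr5]]]]]] | [s' [m3 [Hm3 [Hs3 [Hr6 Hc2]]]]]].
    + subst l. destruct Hc as [[_ Hc] | [xx [yy [Hxx [Hyy Hrr]]]]]; [congruence|].
      subst m2. injection Hy' as <-. left. split; auto. exists z2.
      split; [eapply tau_star_trans; eauto|]. split; [exists s; auto|].
      exists xx; split; auto. exists yy; auto.
    + right. exists s', m3. split; [eapply tau_star_trans; eauto|]. split; auto.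
      split; [exists s; auto|].
      destruct Hc as [[Hc Hc'] | [xx [yy [Hxx [Hyy Hrr]]]]];
      destruct Hc2 as [[Hd Hd'] | [xx' [yy' [Hxx' [Hyy' Hrr']]]]]; subst; try discriminate.
      * left; auto.
      * injection Hxx' as <-. right. exists xx, yy'. split; auto. split; auto. exists yy; auto.
Qed.

Lemma gb_trans {A K} (T : transs A K) x y z : gb T x y -> gb T y z -> gb T x z.
Proof.
  intros [R1 [H1 [H1' Hr1]]] [R2 [H2 [H2' Hr2]]].
  exists (comp R1 R2). split; [apply sim_comp; auto|]. split; [|exists y; auto].
  eapply sim_ext; [|apply (sim_comp H2' H1')].
  intros a b; unfold comp, flipr; split; intros [c [? ?]]; exists c; auto.
Qed.

Lemma gb_sym {A K} (T : transs A K) x y : gb T x y -> gb T y x.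
Proof.
  intros [R [H1 [H2 Hr]]]. exists (flipr R). auto.
Qed.

Lemma sim_eq {A K} (T : transs A K) : sim T eq.
Proof.
  intros s1 s2 <- l m1 Ht. right. exists s1, m1. split; [constructor|]. split; auto. split; auto.
  destruct m1; [right; eauto | left; auto].
Qed.

Lemma gb_refl {A K} (T : transs A K) x : gb T x x.
Proof.
  exists eq. split; [apply sim_eq|]. split; auto.
  eapply sim_ext; [|apply sim_eq]. unfold flipr; split; auto.
Qed.

Definition GH {A K} (defn : K -> term A K) (H : A -> Prop) : transs A K :=
  fun s l o => pre_trans defn s l o /\ ~ isH H l.

Lemma sim_restr {A K} (defn : K -> term A K) H R :
  sim (pre_trans defn) R -> sim (GH defn H) R.
Proof.
  intros Hs s1 s2 Hr l m1 [Ht Hn].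
  eapply bb_mono; [ | | | apply (Hs _ _ Hr _ _ Ht)]; auto.
  - intros s s' Hx; split; auto.
  - intros; split; auto.
Qed.

Lemma gb_restr {A K} (defn : K -> term A K) H x y :
  gb (pre_trans defn) x y -> gb (GH defn H) x y.
Proof. intros [R [? [? ?]]]; exists R; split; [|split]; auto; apply sim_restr; auto. Qed.

Lemma net_to_global {A K} (S : places A K) (T G : transs A K) x y :
  (forall s l o, T s l o <-> S s /\ G s l o) -> bbisim S T x y -> gb G x y.
Proof.
  intros HT [R [[HS [H2 H3]] Hr]]. exists R. split; [|split]; auto.
  - intros s1 s2 Hr' l m1 Hg. assert (T s1 l m1) by (apply HT; split; auto; apply (HS _ _ Hr')).
    eapply bb_mono; [ | | | apply (H2 _ _ Hr' _ _ H)]; auto; intros; apply HT; auto.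
  - intros s1 s2 Hr' l m1 Hg. unfold flipr in Hr'.
    assert (T s1 l m1) by (apply HT; split; auto; apply (HS _ _ Hr')).
    eapply bb_mono; [ | | | apply (H3 _ _ Hr' _ _ H)]; auto; intros; apply HT; auto.
Qed.

Lemma tau_star_net {A K} {S : places A K} {T G : transs A K} :
  (forall s l o, T s l o <-> S s /\ G s l o) ->
  (forall s l s', S s -> G s l (Some s') -> S s') ->
  forall a b, tau_star G a b -> S a -> tau_star T a b /\ S b.
Proof.
  intros HT Hc a b Ht; induction Ht; intros; [split; [constructor|auto]|].
  assert (S s') by eauto. destruct IHHt as [? ?]; auto. split; auto.
  econstructor; eauto. apply HT; auto.
Qed.

Lemma sim_net {A K} (S : places A K) (T G : transs A K) R :
  (forall s l o, T s l o <-> S s /\ G s l o) ->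
  (forall s l s', S s -> G s l (Some s') -> S s') ->
  sim G R -> sim T (fun a b => R a b /\ S a /\ S b).
Proof.
  intros HT Hc Hs s1 s2 [Hr [HS1 HS2]] l m1 Ht.
  apply HT in Ht. destruct Ht as [_ Ht].
  destruct (Hs _ _ Hr _ _ Ht) as [[Hl [m2 [Hm [Hr1 [x [Hx Hr2]]]]]] | [s [m2 [Hm [Hs' [Hr' Hcc]]]]]].
  - subst. destruct (tau_star_net HT Hc _ _ Hm HS2) as [? ?].
    left. split; auto. exists m2. split; auto. split; auto. exists x. split; auto.
    split; auto. split; eauto.
  - destruct (tau_star_net HT Hc _ _ Hm HS2) as [? ?].
    right. exists s, m2. split; auto. split; [apply HT; auto|]. split; auto.
    destruct Hcc as [? | [x [y [? [? ?]]]]]; [left; auto| right]. subst.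
    exists x, y. split; auto. split; auto. split; auto. split; eauto.
Qed.

Lemma global_to_net {A K} (S : places A K) (T G : transs A K) x y :
  (forall s l o, T s l o <-> S s /\ G s l o) ->
  (forall s l s', S s -> G s l (Some s') -> S s') ->
  S x -> S y -> gb G x y -> bbisim S T x y.
Proof.
  intros HT Hc Sx Sy [R [H1 [H2 Hr]]].
  exists (fun a b => R a b /\ S a /\ S b). split; [|auto].
  split; [intros a b [? [? ?]]; auto|]. split.
  - apply sim_net with G; auto.
  - intros s1 s2 Hr' l m2 Ht.
    assert (sim T (fun a b => flipr R a b /\ S a /\ S b)) by (apply sim_net with G; auto).
    eapply bb_mono; [ | | | apply (H _ _ (conj (proj1 Hr') (conj (proj2 (proj2 Hr')) (proj1 (proj2 Hr')))) _ _ Ht)]; auto.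
    unfold flipr; intros a b [? [? ?]]; auto.
Qed.

Set Implicit Arguments.

Lemma F2_perm_r {X} {R : X -> X -> Prop} {b b'} : Permutation b b' ->
  forall a, Forall2 R a b -> exists a', Permutation a a' /\ Forall2 R a' b'.
Proof.
  intros Hp; induction Hp; intros a Hf.
  - exists a; auto.
  - inversion Hf; subst. destruct (IHHp _ H3) as [a' [? ?]]. exists (x0 :: a'); auto.
  - inversion Hf; subst. match goal with H : Forall2 _ _ (_ :: _) |- _ => inversion H; subst end. eexists (_ :: _ :: _). split; [apply perm_swap|]. repeat constructor; auto.
  - destruct (IHHp1 _ Hf) as [a1 [? ?]]. destruct (IHHp2 _ H0) as [a2 [? ?]].
    exists a2; split; auto. eapply perm_trans; eauto.
Qed.

Lemma addclos_F2 {A K} (R : term A K -> term A K -> Prop) m1 m2 :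
  addclos R m1 m2 -> exists m1', Permutation m1 m1' /\ Forall2 R m1' m2.
Proof.
  intros Ha; induction Ha.
  - exists []; auto.
  - destruct IHHa as [m [? ?]]. exists (s1 :: m); auto.
  - destruct IHHa as [m [? ?]]. destruct (F2_perm_r H0 H2) as [a' [? ?]].
    exists a'; split; auto. eapply perm_trans; [apply Permutation_sym; eauto|]. eapply perm_trans; eauto.
Qed.

Lemma F2_addclos {A K} (R : term A K -> term A K -> Prop) m1 m2 :
  Forall2 R m1 m2 -> addclos R m1 m2.
Proof. intros Hf; induction Hf; constructor; auto. Qed.

Lemma addclos_perm {A K} (R : term A K -> term A K -> Prop) m1 m2 m1' m2' :
  addclos R m1 m2 -> Permutation m1 m1' -> Permutation m2 m2' -> addclos R m1' m2'.
Proof. intros; eapply ac_perm; eauto. Qed.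

Lemma addclos_flip {A K} (R : term A K -> term A K -> Prop) m1 m2 :
  addclos R m1 m2 -> addclos (fun x y => R y x) m2 m1.
Proof. intros Ha; induction Ha; [constructor | constructor; auto | eapply ac_perm; eauto]. Qed.

Lemma addclos_inv_cons_r {A K} (R : term A K -> term A K -> Prop) m1 t L :
  addclos R m1 (t :: L) -> exists u Kk, Permutation m1 (u :: Kk) /\ R u t /\ addclos R Kk L.
Proof.
  intros Ha. destruct (addclos_F2 Ha) as [m [Hp Hf]]. inversion Hf; subst.
  exists x, l. split; auto. split; auto. apply F2_addclos; auto.
Qed.

Lemma addclos_app {A K} (R : term A K -> term A K -> Prop) a b c d :
  addclos R a b -> addclos R c d -> addclos R (a ++ c) (b ++ d).
Proof.
  intros Hab Hcd. destruct (addclos_F2 Hab) as [a' [? ?]]. destruct (addclos_F2 Hcd) as [c' [? ?]].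
  apply addclos_perm with (a' ++ c') (b ++ d).
  - apply F2_addclos, Forall2_app; auto.
  - apply Permutation_app; apply Permutation_sym; auto.
  - auto.
Qed.

Lemma addclos_length {A K} (R : term A K -> term A K -> Prop) m1 m2 :
  addclos R m1 m2 -> length m1 = length m2.
Proof.
  intros Ha; induction Ha; simpl; auto.
  rewrite <- (Permutation_length H), <- (Permutation_length H0); auto.
Qed.

Lemma addclos_mono_in {A K} (R R' : term A K -> term A K -> Prop) m1 m2 :
  addclos R m1 m2 -> (forall a b, In a m1 -> In b m2 -> R a b -> R' a b) -> addclos R' m1 m2.
Proof.
  intros Ha; induction Ha; intros Hi.
  - constructor.
  - constructor; [apply Hi; simpl; auto|]. apply IHHa; intros; apply Hi; simpl; auto.
  - eapply ac_perm; eauto. apply IHHa; intros; apply Hi; auto;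
      eapply Permutation_in; eauto.
Qed.

Lemma addclos_refl {A K} (R : term A K -> term A K -> Prop) m :
  (forall x, R x x) -> addclos R m m.
Proof. intros; induction m; constructor; auto. Qed.

Lemma addclos_inv_cons_l {A K} (R : term A K -> term A K -> Prop) t L m2 :
  addclos R (t :: L) m2 -> exists v B, Permutation m2 (v :: B) /\ R t v /\ addclos R L B.
Proof.
  intros Ha. apply addclos_flip in Ha. destruct (addclos_inv_cons_r Ha) as [v [B [? [? ?]]]].
  exists v, B. split; auto. split; auto. apply addclos_flip in H1. exact H1.
Qed.

Lemma cancel1 {A K} (E : term A K -> term A K -> Prop)
  (Etr : forall a b c, E a b -> E b c -> E a c) x a b :
  addclos E (x :: a) (x :: b) -> addclos E a b.
Proof.
  intros Ha. destruct (addclos_inv_cons_r Ha) as [u [Kk [Hp [Hux Hk]]]].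
  assert (Hin : In u (x :: a)) by (eapply Permutation_in; [apply Permutation_sym; eauto | simpl; auto]).
  destruct Hin as [<- | Hin].
  - apply Permutation_cons_inv in Hp. eapply ac_perm; eauto. apply Permutation_sym; auto.
  - destruct (in_split _ _ Hin) as [a1 [a2 ->]].
    assert (Hp2 : Permutation Kk (x :: a1 ++ a2)).
    { apply Permutation_sym in Hp. apply (@Permutation_cons_app_inv _ _ (x :: a1)) in Hp.
      exact Hp. }
    assert (Hk2 : addclos E (x :: a1 ++ a2) b) by (eapply ac_perm; eauto).
    destruct (addclos_inv_cons_l Hk2) as [v [B [Hb [Hxv HB]]]].
    eapply ac_perm; [apply (@ac_cons _ _ _ u v); [eauto | exact HB] | | apply Permutation_sym; auto].
    apply Permutation_middle.
Qed.

Lemma cancel_list {A K} (E : term A K -> term A K -> Prop)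
  (Etr : forall a b c, E a b -> E b c -> E a c) Kk :
  forall a b, addclos E (Kk ++ a) (Kk ++ b) -> addclos E a b.
Proof.
  induction Kk; simpl; intros; auto. apply IHKk. eapply cancel1; eauto.
Qed.

Lemma cancel_single {A K} (E : term A K -> term A K -> Prop)
  (Etr : forall a b c, E a b -> E b c -> E a c) w y Kk :
  addclos E (w :: Kk) (y :: Kk) -> E w y.
Proof.
  intros Ha. assert (Hb : addclos E (Kk ++ [w]) (Kk ++ [y])) by
    (eapply ac_perm; eauto; apply Permutation_cons_append).
  apply cancel_list in Hb; auto.
  destruct (addclos_inv_cons_r Hb) as [u [B [Hp [Hu _]]]].
  apply Permutation_length_1_inv in Hp. injection Hp as -> _. auto.
Qed.

Lemma step_decomp {A K} (defn : K -> term A K) P mu P' : step defn P mu P' ->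
  exists l1 t l2 t', dec P = l1 ++ t :: l2 /\ step defn t mu t' /\ dec P' = l1 ++ dec t' ++ l2.
Proof.
  intros Hs; induction Hs.
  - exists [], (Pre mu p), [], p. simpl; rewrite app_nil_r; repeat split; constructor.
  - exists [], (@Cst A K k), [], p'. simpl; rewrite app_nil_r; repeat split; constructor; auto.
  - exists [], (Sum p q), [], p'. simpl; rewrite app_nil_r; repeat split; constructor; auto.
  - exists [], (Sum q p), [], p'. simpl; rewrite app_nil_r; repeat split; apply st_sumr; auto.
  - destruct IHHs as [l1 [t [l2 [t' [E1 [Ht E2]]]]]].
    exists l1, t, (l2 ++ dec q), t'. simpl. rewrite E1, E2. repeat rewrite <- app_assoc.
    repeat split; auto.
  - destruct IHHs as [l1 [t [l2 [t' [E1 [Ht E2]]]]]].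
    exists (dec q ++ l1), t, l2, t'. simpl. rewrite E1, E2. repeat rewrite <- app_assoc.
    repeat split; auto.
Qed.

Lemma lift_step {A K} (defn : K -> term A K) P u l u' : In u (dec P) -> step defn u l u' ->
  exists P1 a b, step defn P l P1 /\ dec P = a ++ u :: b /\ dec P1 = a ++ dec u' ++ b.
Proof.
  revert u l u'; induction P; intros u l u' Hin Hs; simpl in Hin.
  - destruct Hin.
  - destruct Hin as [<- | []]. exists u', [], []. simpl; rewrite app_nil_r; auto.
  - destruct Hin as [<- | []]. exists u', [], []. simpl; rewrite app_nil_r; auto.
  - destruct Hin as [<- | []]. exists u', [], []. simpl; rewrite app_nil_r; auto.
  - apply in_app_or in Hin. destruct Hin as [Hin | Hin].
    + destruct (IHP1 _ _ _ Hin Hs) as [Q [a [b [Hq [E1 E2]]]]].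
      exists (Par Q P2), a, (b ++ dec P2). simpl. rewrite E1, E2.
      repeat rewrite <- app_assoc. split; [constructor; auto | auto].
    + destruct (IHP2 _ _ _ Hin Hs) as [Q [a [b [Hq [E1 E2]]]]].
      exists (Par P1 Q), (dec P1 ++ a), b. simpl. rewrite E1, E2.
      repeat rewrite <- app_assoc. split; [apply st_parr; auto | auto].
Qed.

Lemma lift_step_perm {A K} (defn : K -> term A K) P u Kk l u' :
  Permutation (dec P) (u :: Kk) -> step defn u l u' ->
  exists P1, step defn P l P1 /\ Permutation (dec P1) (dec u' ++ Kk).
Proof.
  intros Hp Hs. assert (Hin : In u (dec P)) by (eapply Permutation_in; [apply Permutation_sym; eauto | simpl; auto]).
  destruct (@lift_step _ _ defn P u l u' Hin Hs) as [P1 [a [b [Hst [E1 E2]]]]]. exists P1. split; auto.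
  rewrite E2. rewrite E1 in Hp. apply Permutation_sym in Hp.
  apply Permutation_cons_app_inv in Hp.
  eapply perm_trans; [apply Permutation_app_swap_app|]. apply Permutation_app_head.
  apply Permutation_sym; auto.
Qed.

Lemma reach_trans {A K} (defn : K -> term A K) a b c :
  reach defn a b -> reach defn b c -> reach defn a c.
Proof. intros H1; induction H1; intros; auto; econstructor; eauto. Qed.

Lemma lift_tau {A K} (defn : K -> term A K) u w :
  tau_star (pre_trans defn) u w -> forall P Kk, Permutation (dec P) (u :: Kk) ->
  exists P1, reach defn P P1 /\ Permutation (dec P1) (w :: Kk).
Proof.
  intros Ht; induction Ht as [u | u u' w Hs Ht IH]; intros P Kk Hp.
  - exists P; split; [constructor | auto].
  - destruct Hs as [s' [Hs Hd]].
    destruct (@lift_step_perm _ _ defn _ _ _ _ _ Hp Hs) as [P1 [Hst Hp1]]. rewrite Hd in Hp1. simpl in Hp1.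
    destruct (IH _ _ Hp1) as [P2 [Hr Hp2]]. exists P2; split; auto. econstructor; eauto.
Qed.

Lemma seq_step {A K} (defn : K -> term A K) (Hdefn : forall k, guarded (defn k)) t mu t' :
  step defn t mu t' -> guarded t \/ sequential t -> sequential t'.
Proof.
  intros Hs; induction Hs; intros Hg.
  - destruct Hg as [Hg | Hg]; [inversion Hg; auto|].
    inversion Hg; subst. inversion H; auto.
  - apply IHHs; auto.
  - apply IHHs. destruct Hg as [Hg | Hg]; [inversion Hg; auto|].
    inversion Hg; subst. inversion H; auto.
  - apply IHHs. destruct Hg as [Hg | Hg]; [inversion Hg; auto|].
    inversion Hg; subst. inversion H; auto.
  - exfalso. destruct Hg as [Hg | Hg]; inversion Hg. inversion H.
  - exfalso. destruct Hg as [Hg | Hg]; inversion Hg. inversion H.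
Qed.

Lemma par_step {A K} (defn : K -> term A K) (Hdefn : forall k, guarded (defn k)) P mu P' :
  step defn P mu P' -> parallel P -> parallel P'.
Proof.
  intros Hs; induction Hs; intros Hp.
  - constructor. eapply seq_step; [exact Hdefn | constructor | ]. inversion Hp; subst; right; eassumption.
  - constructor. eapply seq_step; [exact Hdefn | apply st_cst; exact Hs | ]. right; apply sq_c.
  - constructor. eapply seq_step; [exact Hdefn | apply st_suml; exact Hs | ]. inversion Hp; subst; right; eassumption.
  - constructor. eapply seq_step; [exact Hdefn | apply st_sumr; exact Hs | ]. inversion Hp; subst; right; eassumption.
  - inversion Hp; subst; [inversion H; subst; match goal with G : guarded _ |- _ => inversion G end|]. apply pr_par; auto.
  - inversion Hp; subst; [inversion H; subst; match goal with G : guarded _ |- _ => inversion G end|]. apply pr_par; auto.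
Qed.

Lemma par_reach {A K} (defn : K -> term A K) (Hdefn : forall k, guarded (defn k)) P P' :
  reach defn P P' -> parallel P -> parallel P'.
Proof. intros Hr; induction Hr; auto. intros; apply IHHr; eapply par_step; eauto. Qed.

Lemma par_dec_seq {A K} (P t : term A K) : parallel P -> In t (dec P) -> sequential t.
Proof.
  intros Hp; induction Hp; intros Hin.
  - destruct q; simpl in Hin; try (destruct Hin as [<- | []]; auto); try destruct Hin; inversion H; match goal with G : guarded _ |- _ => inversion G end.
  - simpl in Hin; apply in_app_or in Hin; destruct Hin; auto.
Qed.

Lemma seq_dec_opt {A K} (t : term A K) : sequential t -> exists o, dec t = of_opt o.
Proof.
  intros Hs. destruct t; simpl.
  - exists None; auto.
  - exists (Some (Pre mu t)); auto.
  - exists (Some (Sum t1 t2)); auto.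
  - exists (Some (@Cst A K k)); auto.
  - exfalso. inversion Hs. inversion H.
Qed.

Lemma mreach_snoc {A K} (T : transs A K) a b c l :
  mreach T a b -> fire T b l c -> mreach T a c.
Proof.
  intros H1; induction H1; intros Hf.
  - eapply mr_step; [exact Hf | apply mr_refl].
  - eapply mr_step; [exact H | apply IHmreach; exact Hf].
Qed.

Lemma net_closed {A K} (defn : K -> term A K) P s l s' :
  net_places defn P s -> pre_trans defn s l (Some s') -> net_places defn P s'.
Proof.
  intros [m [Hm Hin]] Ht. destruct (in_split _ _ Hin) as [a [b ->]].
  exists (a ++ b ++ [s']). split.
  - apply (mreach_snoc (l:=l) Hm). exists s, (Some s'), (a ++ b). split; auto. split.
    + apply Permutation_sym, Permutation_middle.
    + simpl. rewrite app_assoc. auto.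
  - apply in_or_app; right; apply in_or_app; right; simpl; auto.
Qed.

Definition TE {A K} (defn : K -> term A K) (P Q : term A K) :=
  addclos (gb (pre_trans defn)) (dec P) (dec Q).

Lemma gameA {A K} (defn : K -> term A K) (Hdefn : forall k, guarded (defn k)) P Q mu Q' :
  parallel Q -> TE defn P Q -> step defn Q mu Q' -> exists P', reach defn P P' /\ TE defn P' Q'.
Proof.
  intros HQ HTE Hs.
  destruct (step_decomp Hs) as [l1 [t [l2 [t' [E1 [Ht E2]]]]]].
  assert (Hseq : sequential t) by (apply (@par_dec_seq _ _ Q t HQ); rewrite E1; apply in_or_app; right; left; auto).
  assert (Hseq' : sequential t') by (eapply seq_step; [exact Hdefn | exact Ht | right; exact Hseq]).
  destruct (seq_dec_opt Hseq') as [o Ho].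
  assert (Hpt : pre_trans defn t mu o) by (exists t'; split; auto).
  assert (HTE' : addclos (gb (pre_trans defn)) (dec P) (t :: l1 ++ l2)).
  { eapply ac_perm; [exact HTE | apply Permutation_refl | rewrite E1; apply Permutation_sym, Permutation_middle]. }
  destruct (addclos_inv_cons_r HTE') as [u [Kk [Hp [Hu Hk]]]].
  destruct Hu as [R [HR1 [HR2 Hr]]].
  destruct (HR2 t u Hr mu o Hpt) as [[Hl [w [Hw [Hr1 [x [Hx Hr2]]]]]] | [w [ow [Hw [Hws [Hr1 Hc]]]]]].
  - destruct (lift_tau Hw P Hp) as [P1 [Hreach Hp1]]. exists P1. split; auto.
    unfold TE. rewrite E2, Ho, Hx. simpl.
    eapply ac_perm; [ | apply Permutation_sym; exact Hp1 | apply Permutation_middle].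
    constructor; auto. exists R; auto.
  - destruct (lift_tau Hw P Hp) as [P1 [Hreach Hp1]].
    destruct Hws as [w' [Hstw Hdw]].
    destruct (@lift_step_perm _ _ defn _ _ _ _ _ Hp1 Hstw) as [P2 [Hst2 Hp2]].
    exists P2. split; [eapply reach_trans; [exact Hreach | econstructor; [exact Hst2 | constructor]]|].
    unfold TE. rewrite E2, Ho. rewrite Hdw in Hp2.
    eapply ac_perm; [ | apply Permutation_sym; exact Hp2 | apply Permutation_app_swap_app].
    destruct Hc as [[-> ->] | [x [y [-> [-> Hxy]]]]]; simpl; auto.
    constructor; auto. exists R; auto.
Qed.

Lemma gameA_reach {A K} (defn : K -> term A K) (Hdefn : forall k, guarded (defn k)) Q Q' :
  reach defn Q Q' -> parallel Q -> forall P, TE defn P Q -> exists P', reach defn P P' /\ TE defn P' Q'.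
Proof.
  intros Hr; induction Hr as [Q | Q mu Q1 Q2 Hs Hr IH]; intros HQ P HTE.
  - exists P; split; auto; constructor.
  - destruct (gameA Hdefn HQ HTE Hs) as [P1 [Hr1 HTE1]].
    destruct (IH (par_step Hdefn Hs HQ) _ HTE1) as [P2 [Hr2 HTE2]].
    exists P2; split; auto. eapply reach_trans; eauto.
Qed.

Theorem corollary4p2 (A K : Type) (finA : Finite A) (finK : Finite K)
    (H : A -> Prop) (defn : K -> term A K)
    (Hdefn : forall k, guarded (defn k))
    (p q : term A K) (Hp : parallel p) (Hq : parallel q) :
  team_equiv defn p q -> DNI defn H p -> DNI defn H q.
Proof.
  intros HTEpq HDNI q' q'' h Hr' Hr'' Hh Hst.
  assert (HTE0 : TE defn p q).
  { unfold TE. eapply addclos_mono_in; [exact HTEpq|]. intros a b _ _ Hab.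
    eapply net_to_global; [|exact Hab].
    intros; unfold utrans, net_trans, uplaces; tauto. }
  destruct (gameA_reach Hdefn Hr' Hq HTE0) as [P' [HrP HTEP]].
  assert (HQ' : parallel q') by (eapply par_reach; eauto).
  destruct (step_decomp Hst) as [l1 [t [l2 [t' [E1 [Ht E2]]]]]].
  assert (Hseq : sequential t) by (apply (@par_dec_seq _ _ q' t HQ'); rewrite E1; apply in_or_app; right; left; auto).
  assert (Hseq' : sequential t') by (eapply seq_step; [exact Hdefn | exact Ht | right; exact Hseq]).
  destruct (seq_dec_opt Hseq') as [o Ho].
  assert (Hpt : pre_trans defn t (Vis h) o) by (exists t'; split; auto).
  assert (HTE' : addclos (gb (pre_trans defn)) (dec P') (t :: l1 ++ l2)).
  { eapply ac_perm; [exact HTEP | apply Permutation_refl | rewrite E1; apply Permutation_sym, Permutation_middle]. }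
  destruct (addclos_inv_cons_r HTE') as [u [Kk [Hp' [Hu Hk]]]].
  destruct Hu as [R [HR1 [HR2 Hr]]].
  destruct (HR2 t u Hr (Vis h) o Hpt) as [[Hl _] | [w [ow [Hw [Hws [Hr1 Hc]]]]]]; [discriminate|].
  destruct (lift_tau Hw P' Hp') as [P1 [Hreach1 Hp1]].
  destruct Hws as [w' [Hstw Hdw]].
  destruct (@lift_step_perm _ _ defn _ _ _ _ _ Hp1 Hstw) as [P2 [Hst2 Hp2]].
  assert (Hrp1 : reach defn p P1) by (eapply reach_trans; eauto).
  assert (Hrp2 : reach defn p P2) by (eapply reach_trans; [exact Hrp1 | econstructor; [exact Hst2 | constructor]]).
  assert (HDg : addclos (gb (GH defn H)) (dec P1) (dec P2)).
  { eapply addclos_mono_in; [exact (HDNI P1 P2 h Hrp1 Hrp2 Hh Hst2)|]. intros a b _ _ Hab.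
    eapply net_to_global; [|exact Hab].
    intros; unfold utrans, rnet_trans, net_trans, uplaces, GH; tauto. }
  rewrite Hdw in Hp2.
  destruct Hc as [[-> ->] | [x [y [-> [-> Hxy]]]]].
  - exfalso. apply addclos_length in HDg.
    rewrite (Permutation_length Hp1), (Permutation_length Hp2) in HDg. simpl in HDg.
    clear -HDg. induction (length Kk); discriminate || (injection HDg; auto).
  - assert (HwY : addclos (gb (GH defn H)) (w :: Kk) (y :: Kk)) by (eapply ac_perm; eauto).
    assert (Hwy : gb (GH defn H) w y) by (eapply cancel_single; [intros ? ? ?; apply gb_trans | exact HwY]).
    assert (Hwt : gb (pre_trans defn) w t) by (exists R; auto).
    assert (Hyx : gb (pre_trans defn) y x) by (exists R; auto).
    assert (Htx : gb (GH defn H) t x).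
    { eapply gb_trans; [apply gb_restr, gb_sym, Hwt|]. eapply gb_trans; [exact Hwy|]. apply gb_restr, Hyx. }
    eapply addclos_mono_in with (R := gb (GH defn H)).
    + rewrite E1, E2, Ho. simpl. apply addclos_app; [apply addclos_refl, gb_refl|].
      constructor; auto. apply addclos_refl, gb_refl.
    + intros a b Ha Hb Hab. apply global_to_net with (G := GH defn H); auto.
      * intros; unfold utrans, rnet_trans, net_trans, uplaces, GH; tauto.
      * intros s l s' [Hs1 | Hs1] [Hg _]; [left | right]; eapply net_closed; eauto.
      * left; exists (dec q'); split; [constructor | auto].
      * right; exists (dec q''); split; [constructor | auto].
Qed.
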